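(* In any block graph $G$ there exists a vertex $w$ with $\Gamma(w)=\Gamma(G)$, and if $\Gamma(G)>\omega(G)$ then every vertex $w$ with $\Gamma(w)=\Gamma(G)$ is a cut-vertex of $G$.
   Context: A Grundy-coloring of a graph $G$ is a proper vertex coloring with nonempty color classes $C_1,\ldots,C_k$ (color $i$ on $C_i$) such that for all $i<j$ every vertex of $C_j$ has a neighbor in $C_i$. $\Gamma(G)$ is the maximum number of colors in a Grundy-coloring of $G$, and for a vertex $v$, $\Gamma(v)$ is the maximum color that $v$ receives in some Grundy-coloring of $G$. $\omega(G)$ is the size of a largest clique. A block of a graph is a maximal 2-connected subgraph or a bridge (as a $K_2$); a block graph is a graph all of whose blocks are complete graphs. A cut-vertex is a vertex whose removal increases the number of connected components. *)

(* Defs.v *)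
(* finite simple graphs as symmetric irreflexive relations. *)
From mathcomp Require Import all_boot.
Set Implicit Arguments. Unset Strict Implicit. Unset Printing Implicit Defensive.

Section Graph.
Variables (T : finType) (e : rel T).

Definition induced_rel (S : {set T}) : rel T :=
  [rel x y | [&& e x y, x \in S & y \in S]].

Definition conn_in (S : {set T}) (x y : T) : bool := connect (induced_rel S) x y.

Definition ncomp (S : {set T}) : nat :=
  #|[set [set y in S | conn_in S x y] | x in S]|.

Definition cut_vertex (v : T) : bool :=
  ncomp [set: T] < ncomp ([set: T] :\ v).

Definition connected_in (S : {set T}) : bool :=
  (S != set0) && [forall x in S, forall y in S, conn_in S x y].

Definition no_cut_in (S : {set T}) : bool :=
  [forall v in S, ncomp (S :\ v) <= ncomp S].

Definition block_like (S : {set T}) : bool := connected_in S && no_cut_in S.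

(* a block: maximal connected subgraph without a cut-vertex
   (= maximal 2-connected subgraph, bridge, or isolated vertex) *)
Definition is_block (B : {set T}) : bool :=
  block_like B && [forall B' : {set T}, (B \subset B') && block_like B' ==> (B' == B)].

Definition clique (B : {set T}) : bool :=
  [forall x in B, forall y in B, (x != y) ==> e x y].

Definition block_graph : Prop := forall B : {set T}, is_block B -> clique B.

Definition omega : nat := \max_(B : {set T} | clique B) #|B|.

(* colors are natural numbers; a Grundy coloring with k colors uses exactly
   colors 1..k. Since the k classes are nonempty, k <= #|T|, so colors fit in
   'I_(#|T|.+1). *)
Definition is_grundy (k : nat) (c : {ffun T -> 'I_(#|T|.+1)}) : bool :=
  [&& [forall v, (0 < c v) && (c v <= k)],
      [forall i : 'I_(#|T|.+1), (0 < i <= k) ==> [exists v, c v == i]],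
      [forall u, forall v, e u v ==> (c u != c v)] &
      [forall v, forall i : 'I_(#|T|.+1),
          (0 < i < c v) ==> [exists u, e v u && (c u == i)]]].

Definition is_grundy_coloring (c : {ffun T -> 'I_(#|T|.+1)}) : bool :=
  [exists k : 'I_(#|T|.+1), is_grundy k c].

Definition Gamma : nat :=
  \max_(k < #|T|.+1 | [exists c, is_grundy k c]) k.

Definition Gamma_v (v : T) : nat :=
  \max_(c : {ffun T -> 'I_(#|T|.+1)} | is_grundy_coloring c) c v.

End Graph.

(* Main.v *)
Require Import Defs.
From mathcomp Require Import all_boot.
Set Implicit Arguments. Unset Strict Implicit. Unset Printing Implicit Defensive.

Section Aux.
Variables (T : finType) (e : rel T).
Hypothesis e_sym : symmetric e.
Hypothesis e_irr : irreflexive e.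
Implicit Types S A B C : {set T}.

Lemma connect_inv (r : rel T) (I : T -> Prop) x y :
  I x -> (forall u v, connect r x u -> I u -> r u v -> I v) -> connect r x y -> I y.
Proof.
move=> Ix H /connectP [p]; elim: p x Ix H => [|a p IH] x Ix H /=.
  by move=> _ ->.
case/andP=> rxa pa ly.
apply: (IH a) pa ly; first exact: (H x a (connect0 _ _) Ix rxa).
move=> u v cau Iu ruv; apply: (H u v) => //.
exact: connect_trans (connect1 rxa) cau.
Qed.

Lemma connect_restr (r r' : rel T) x y :
  (forall u v, connect r x u -> r u v -> connect r' u v) -> connect r x y -> connect r' x y.
Proof.
move=> H; apply: (@connect_inv r (connect r' x)); first exact: connect0.
move=> u v cxu cxu' ruv; exact: connect_trans cxu' (H u v cxu ruv).
Qed.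

Lemma induced_sym S : symmetric (induced_rel e S).
Proof. by move=> a b; rewrite /induced_rel /= e_sym (andbC (a \in S)). Qed.

Lemma conn_sym S a b : conn_in e S a b = conn_in e S b a.
Proof. exact: (sym_connect_sym (induced_sym S)). Qed.

Lemma conn_trans S a b c : conn_in e S a b -> conn_in e S b c -> conn_in e S a c.
Proof. exact: connect_trans. Qed.

Lemma conn_edge S a b : e a b -> a \in S -> b \in S -> conn_in e S a b.
Proof. by move=> eab aS bS; apply: connect1; rewrite /induced_rel /= eab aS bS. Qed.

Lemma conn_mono S S' a b : S \subset S' -> conn_in e S a b -> conn_in e S' a b.
Proof.
move=> sub; apply: connect_restr => u v _ /and3P [euv uS vS].
by apply: conn_edge => //; apply: (subsetP sub).
Qed.

Definition compo S z := [set u in S | conn_in e S z u].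

Lemma ncompE S : ncomp e S = #|compo S @: S|.
Proof. by []. Qed.

Lemma comp_eq S a b : conn_in e S a b -> compo S a = compo S b.
Proof.
move=> cab; apply/setP => u; rewrite !inE; case: (u \in S) => //=.
apply/idP/idP => H; first by apply: conn_trans H; rewrite conn_sym.
exact: conn_trans cab H.
Qed.

Lemma hub_all A h : (forall z, z \in A -> conn_in e A z h) ->
  forall a b, a \in A -> b \in A -> conn_in e A a b.
Proof.
move=> H a b aA bA; apply: conn_trans (H a aA) _; rewrite conn_sym; exact: H.
Qed.

Lemma hub_ncomp A h : (forall z, z \in A -> conn_in e A z h) -> ncomp e A <= 1.
Proof.
move=> H; rewrite ncompE -(cards1 (compo A h)); apply: subset_leq_card.
apply/subsetP => C /imsetP [z zA ->]; rewrite inE; apply/eqP; exact: comp_eq (H z zA).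
Qed.

Lemma ncomp_pos A : A != set0 -> 0 < ncomp e A.
Proof.
case/set0Pn => z zA; rewrite ncompE card_gt0; apply/set0Pn; exists (compo A z).
exact: imset_f.
Qed.

Lemma block_ext S : block_like e S -> exists B, is_block e B && (S \subset B).
Proof.
move=> bS.
case: (@arg_maxnP _ S (fun B => (S \subset B) && block_like e B) (fun B => #|B|)).
  by rewrite subxx.
move=> B /andP [sSB bB] Hmax; exists B; rewrite sSB andbT /is_block bB /=.
apply/forallP => B'; apply/implyP => /andP [sBB' bB'].
rewrite eq_sym eqEcard sBB' /=; apply: Hmax; rewrite bB' andbT.
exact: subset_trans sSB sBB'.
Qed.

End Aux.

Section Aux2.
Variables (T : finType) (e : rel T).
Hypothesis e_sym : symmetric e.
Hypothesis e_irr : irreflexive e.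
Implicit Types S A B C : {set T}.

Lemma noncut_conn w x y : ~~ cut_vertex e w -> e w x -> e w y ->
  conn_in e (setT :\ w) x y.
Proof.
move=> ncut ewx ewy; apply/negPn/negP => nxy; move: ncut; rewrite /cut_vertex.
set A := [set: T]; set A' := A :\ w.
have xA' : x \in A' by rewrite !inE andbT; apply/eqP => xw; rewrite xw e_irr in ewx.
have yA' : y \in A' by rewrite !inE andbT; apply/eqP => yw; rewrite yw e_irr in ewy.
pose G C := if [pick z in C] is Some z then compo e A z else set0.
have GE z : z \in A' -> G (compo e A' z) = compo e A z.
  move=> zA'; rewrite /G; case: pickP => [u | ].
    rewrite inE => /andP [_ czu]; apply/esym/(comp_eq e_sym).
    apply: (conn_mono _ czu); exact: subsetT.
  by move/(_ z); rewrite inE zA' /conn_in connect0.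
have eqA : compo e A @: A = G @: (compo e A' @: A').
  apply/setP => C; apply/imsetP/imsetP.
    case=> z _ ->; case: (z =P w) => [-> | /eqP zw].
      exists (compo e A' x); first exact: imset_f.
      rewrite GE //; apply: (comp_eq e_sym); apply: conn_edge => //; exact: in_setT.
    have zA' : z \in A' by rewrite !inE zw.
    by exists (compo e A' z); [exact: imset_f | rewrite GE].
  case=> C' /imsetP [z zA' ->] ->; exists z; [exact: in_setT | by rewrite GE].
rewrite !ncompE eqA -leqNgt => H.
have /imset_injP Hinj : #|G @: (compo e A' @: A')| == #|compo e A' @: A'|.
  by rewrite eqn_leq H leq_imset_card.
have := Hinj (compo e A' x) (compo e A' y) (imset_f _ xA') (imset_f _ yA').
rewrite !GE // => Heq.
have Heq' : compo e A' x = compo e A' y.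
  apply: Heq; apply: (comp_eq e_sym); apply: (@conn_trans _ _ _ _ w).
    by apply: conn_edge; rewrite ?in_setT // e_sym.
  by apply: conn_edge; rewrite ?in_setT.
have : y \in compo e A' x by rewrite Heq' inE yA' /conn_in connect0.
by rewrite inE yA' /= (negbTE nxy).
Qed.

End Aux2.

Section Aux3.
Variables (T : finType) (e : rel T).
Hypothesis e_sym : symmetric e.
Hypothesis e_irr : irreflexive e.
Implicit Types S A B C : {set T}.

Lemma two_nbrs w x y : e w x -> e w y -> conn_in e (setT :\ w) x y ->
  exists S, [&& block_like e S, x \in S & y \in S].
Proof.
move=> ewx ewy cxy.
have xw : x != w by apply/eqP => xw; rewrite xw e_irr in ewx.
have yw : y != w by apply/eqP => yw; rewrite yw e_irr in ewy.
pose pr (Q : {set T}) := [&& w \notin Q, x \in Q, y \in Q & conn_in e Q x y].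
have pr0 : pr (setT :\ w) by rewrite /pr !inE eqxx xw yw cxy.
case: (@arg_minnP _ _ pr (fun Q => #|Q|) pr0) => P prP Hmin.
move: (prP) => /and4P [wP xP yP cP].
have min1 z : z \in P -> conn_in e P x z.
  move=> zP; pose D := compo e P x.
  have DP : D \subset P by apply/subsetP => u; rewrite inE => /andP [].
  have prD : pr D.
    rewrite /pr !inE xP yP cP /conn_in connect0 /=.
    rewrite (negbTE wP) /=.
    apply: (connect_restr _ cP) => u v cxu /and3P [euv uP vP].
    apply: conn_edge => //; rewrite inE ?uP ?vP //=.
    by apply: (conn_trans cxu); apply: conn_edge.
  have : D == P by rewrite eqEcard DP Hmin.
  move/eqP => DE; have := zP; rewrite -{1}DE inE => /andP [] //.
have min2 v z : v \in P -> z \in P :\ v ->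
    (x \in compo e (P :\ v) z) || (y \in compo e (P :\ v) z).
  move=> vP zPv; apply/negPn/negP; rewrite negb_or => /andP [xD yD].
  pose D := compo e (P :\ v) z.
  have DPv : D \subset P :\ v by apply/subsetP => u; rewrite inE => /andP [].
  have vD : v \notin D by apply/negP => /(subsetP DPv); rewrite !inE eqxx.
  have Dcl u b : u \in D -> induced_rel e P u b -> b != v -> b \in D.
    rewrite inE => /andP [uPv czu] /and3P [eub uP bP] bv.
    have bPv : b \in P :\ v by rewrite !inE bv bP.
    rewrite inE bPv /=; apply: (conn_trans czu); exact: conn_edge.
  pose Q := P :\: D.
  have prQ : pr Q.
    have xD' : x \notin D := xD.
    have yD' : y \notin D := yD.
    rewrite /pr !in_setD xP yP (negbTE xD') (negbTE yD') (negbTE wP) /=.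
    have vQ : v \in Q by rewrite in_setD vD vP.
    pose I b := if b \in D then conn_in e Q x v else conn_in e Q x b.
    have : I y.
      apply: (@connect_inv _ _ I x y) cP; first by rewrite /I (negbTE xD') /conn_in connect0.
      move=> u b _; rewrite /I => Iu Pub.
      have Pbu : induced_rel e P b u by rewrite induced_sym.
      case: ifP Iu => uD Iu.
        case: ifP => bD //; case: (b =P v) => [-> // | /eqP bv].
        by rewrite (Dcl u b uD Pub bv) in bD.
      case: ifP => bD.
        case: (u =P v) => [<- // | /eqP uv].
        by rewrite (Dcl b u bD Pbu uv) in uD.
      move: Pub => /and3P [eub uP bP]; apply: (conn_trans Iu); apply: conn_edge => //.
        by rewrite in_setD uD.
      by rewrite in_setD bD.
    by rewrite /I (negbTE yD') andbF.
  have := Hmin Q prQ; apply/negP; rewrite -ltnNge; apply: proper_card.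
  rewrite properE subsetDl /=; apply/subsetPn; exists z.
    by move: zPv; rewrite !inE => /andP [].
  have zD : z \in D by rewrite inE zPv /conn_in connect0.
  by rewrite in_setD zD.
pose S := w |: P.
have wS : w \in S by rewrite !inE eqxx.
have PS : P \subset S by apply: subsetUr.
have hubS z : z \in S -> conn_in e S z w.
  rewrite !inE => /orP [/eqP -> | zP]; first exact: connect0.
  apply: (@conn_trans _ _ _ _ x).
    by rewrite (conn_sym e_sym); apply: (conn_mono PS); apply: min1.
  apply: conn_edge => //; [by rewrite e_sym | exact: (subsetP PS)].
exists S; rewrite !(subsetP PS) // andbT /block_like /connected_in.
rewrite andbT; apply/andP; split; [apply/andP; split | ].
- by apply/set0Pn; exists w.
- apply/forallP => a; apply/implyP => aS; apply/forallP => b; apply/implyP => bS.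
  exact: (hub_all e_sym hubS).
apply/forallP => v; apply/implyP => vS.
have S0 : S != set0 by apply/set0Pn; exists w.
apply: (leq_trans _ (@ncomp_pos _ e _ S0)).
case: (v =P w) => [-> | /eqP vw].
  have -> : S :\ w = P.
    apply/setP => u; rewrite !inE; case: (u =P w) => [-> | //]; by rewrite (negbTE wP).
  apply: (hub_ncomp e_sym (h := x)) => z zP; rewrite (conn_sym e_sym); exact: min1.
have vP : v \in P by move: vS; rewrite !inE (negbTE vw).
apply: (hub_ncomp e_sym (h := w)) => z; rewrite !inE => /andP [zv /orP [/eqP -> | zP]].
  exact: connect0.
have wSv : w \in S :\ v by rewrite !inE eq_sym vw eqxx.
have sub : P :\ v \subset S :\ v by apply: setSD.
have zPv : z \in P :\ v by rewrite !inE zv zP.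
case/orP: (min2 v z vP zPv); rewrite inE => /andP [aPv cza].
  apply: (conn_trans (conn_mono sub cza)); apply: conn_edge => //; first by rewrite e_sym.
  exact: (subsetP sub).
apply: (conn_trans (conn_mono sub cza)); apply: conn_edge => //; first by rewrite e_sym.
exact: (subsetP sub).
Qed.

End Aux3.

Lemma noncut_clique (T : finType) (e : rel T) (e_sym : symmetric e) (e_irr : irreflexive e)
  (hblock : block_graph e) w x y :
  ~~ cut_vertex e w -> e w x -> e w y -> x != y -> e x y.
Proof.
move=> nc ewx ewy xy.
have [S /and3P [bS xS yS]] := two_nbrs e_sym e_irr ewx ewy (noncut_conn e_sym e_irr nc ewx ewy).
have [B /andP [bB sSB]] := block_ext bS.
move: (hblock B bB) => /forallP /(_ x) /implyP /(_ (subsetP sSB x xS)).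
move=> /forallP /(_ y) /implyP /(_ (subsetP sSB y yS)) /implyP; exact.
Qed.

Lemma bigmax_att (I : finType) (P : pred I) (F : I -> nat) :
  0 < \max_(i | P i) F i -> {i | P i & \max_(i | P i) F i = F i}.
Proof.
case: (pickP P) => [i0 Pi0 _ | P0]; last by rewrite big_pred0.
exists [arg max_(i > i0 | P i) F i]; first by case: arg_maxnP.
exact: bigmax_eq_arg.
Qed.

Lemma Gamma_v_le (T : finType) (e : rel T) v : Gamma_v e v <= Gamma e.
Proof.
apply/bigmax_leqP => c /existsP [k Hg].
have := Hg; case/and4P=> H1 _ _ _.
have /andP [_ cvk] := forallP H1 v.
apply: leq_trans cvk _.
apply: (@leq_bigmax_cond _ (fun k : 'I_#|T|.+1 => [exists c, is_grundy e k c]) (fun k => nat_of_ord k) k).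
by apply/existsP; exists c.
Qed.

Theorem proposition3 (T : finType) (e : rel T)
    (e_sym : symmetric e) (e_irr : irreflexive e)
    (T_nonempty : 0 < #|T|)
    (hblock : block_graph e) :
  (exists w : T, Gamma_v e w = Gamma e) /\
  (omega e < Gamma e ->
     forall w : T, Gamma_v e w = Gamma e -> cut_vertex e w).
Proof.
split.
  case: (posnP (Gamma e)) => [G0 | Gpos].
    case/card_gt0P: T_nonempty => w _; exists w; apply/eqP.
    by rewrite eqn_leq Gamma_v_le G0 leq0n.
  have [k Pk Gk] : {k : 'I_#|T|.+1 | [exists c, is_grundy e k c] & Gamma e = k}.
    exact: (bigmax_att Gpos).
  case/existsP: Pk => c Hc; have := Hc; case/and4P => _ H2 _ _.
  have /existsP [v /eqP cv] : [exists v, c v == k].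
    by apply: (implyP (forallP H2 k)); rewrite leqnn andbT -Gk.
  exists v; apply/eqP; rewrite eqn_leq Gamma_v_le Gk -cv.
  apply: (@leq_bigmax_cond _ (fun c => is_grundy_coloring e c) (fun c => nat_of_ord (c v)) c).
  by apply/existsP; exists k.
move=> Hom w Hw; apply/negPn/negP => nc.
have Gpos : 0 < Gamma_v e w by rewrite Hw; apply: leq_ltn_trans Hom.
have [c Ac Gc] : {c | is_grundy_coloring e c & Gamma_v e w = c w}.
  by rewrite /Gamma_v; apply: bigmax_att.
case/existsP: Ac => k; case/and4P => _ _ _ H4.
set m := nat_of_ord (c w) in Gc.
pose N := [set u | e w u].
have clq : clique e (w |: N).
  apply/forallP => a; apply/implyP; rewrite !inE => /orP [/eqP -> | ea];
    apply/forallP=> b; apply/implyP; rewrite !inE => /orP [/eqP -> | eb]; apply/implyP => ab.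
  - by rewrite eqxx in ab.
  - exact: eb.
  - by rewrite e_sym.
  - exact: (noncut_clique e_sym e_irr hblock nc).
have hom : #|w |: N| <= omega e.
  exact: (@leq_bigmax_cond _ (fun B => clique e B) (fun B => #|B|) _ clq).
have cN : #|w |: N| = #|N|.+1 by rewrite cardsU1 inE e_irr.
have lt_m : m <= #|T| by rewrite -ltnS ltn_ord.
pose f (j : 'I_m.-1) := odflt w [pick u | e w u && (c u == inord j.+1 :> 'I_#|T|.+1)].
have fP (j : 'I_m.-1) : e w (f j) && (c (f j) == inord j.+1 :> 'I_#|T|.+1).
  rewrite /f; case: pickP => [u // | H0].
  have hj : j.+1 < m by rewrite -ltn_predRL.
  have : [exists u, e w u && (c u == inord j.+1 :> 'I_#|T|.+1)].
    move/forallP: H4 => /(_ w) /forallP /(_ (inord j.+1)) /implyP; apply.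
    rewrite inordK; last by rewrite ltnS; apply: leq_trans (ltnW hj) lt_m.
    by rewrite hj.
  by case/existsP => u; rewrite H0.
have finj : injective f.
  move=> j1 j2 fj.
  have := fP j1; have := fP j2; rewrite fj => /andP [_ /eqP ->] /andP [_ /eqP].
  move/(congr1 val); rewrite /= !inordK; last 2 first.
  - by rewrite ltnS; apply: leq_trans (ltn_ord j1) (leq_trans (leq_pred m) lt_m).
  - by rewrite ltnS; apply: leq_trans (ltn_ord j2) (leq_trans (leq_pred m) lt_m).
  by case => h; apply: ord_inj.
have hN : m.-1 <= #|N|.
  rewrite -{1}(card_ord m.-1) -cardsT -(card_imset _ finj); apply: subset_leq_card.
  by apply/subsetP => u /imsetP [j _ ->]; rewrite inE; case/andP: (fP j).
move: Hom; rewrite -Hw Gc -/m => Hom.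
have h2 : m <= omega e.
  apply: leq_trans hom; rewrite cN; apply: leq_trans (leqSpred m) _; by rewrite ltnS.
by rewrite ltnNge h2 in Hom.
Qed.
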